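(* A term $t$ is $\to_w$-normal if and only if $t$ is a weak normal term according to the following grammar: weak answers $a ::= v \mid a[x\backslash i]$ with $x\notin\mathrm{ofv}(a)$ $\mid a[x\backslash a']$ with $x\in \mathrm{fv}(a)\setminus\mathrm{ofv}(a)$; inert terms $i ::= x \mid i\,n \mid i[x\backslash i']$ with $x\notin\mathrm{ofv}(i)$ $\mid i[x\backslash a]$ with $x\in\mathrm{fv}(i)\setminus\mathrm{ofv}(i)$; weak normal terms $n ::= a \mid i$.
   Context: Terms: $t,u,s ::= x \mid \lambda x.t \mid t\,u \mid t[x\backslash u]$, where $t[x\backslash u]$ is an explicit substitution binding $x$ in $t$; terms up to $\alpha$-renaming; $\mathrm{fv}(t[x\backslash u]) = (\mathrm{fv}(t)\setminus\{x\})\cup \mathrm{fv}(u)$. Values: $v ::= \lambda x.t$. Substitution contexts: $S ::= \langle\cdot\rangle \mid S[x\backslash u]$. Weak contexts: $W ::= \langle\cdot\rangle \mid W\,t \mid t\,W \mid t[x\backslash W] \mid W[x\backslash u]$. $W\langle\langle t\rangle\rangle$ denotes plugging where $W$ does not capture free variables of $t$. Root rules: $S\langle \lambda x.t\rangle u \mapsto_m S\langle t[x\backslash u]\rangle$; $W\langle\langle x\rangle\rangle[x\backslash u] \mapsto_{e} W\langle\langle u\rangle\rangle[x\backslash u]$ ($W$ weak context); $t[x\backslash S\langle v\rangle] \mapsto_{gcv} S\langle t\rangle$ if $x\notin\mathrm{fv}(t)$. $\to_w$ is the union of the closures of these three rules under weak contexts. Shallow free variables: $\mathrm{ofv}(x)=\{x\}$,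 $\mathrm{ofv}(\lambda x.t)=\emptyset$, $\mathrm{ofv}(tu)=\mathrm{ofv}(t)\cup\mathrm{ofv}(u)$, $\mathrm{ofv}(t[x\backslash u]) = (\mathrm{ofv}(t)\setminus\{x\})\cup\mathrm{ofv}(u)$. *)

(* Defs.v *)
From mathcomp Require Import all_boot.
Set Implicit Arguments. Unset Strict Implicit. Unset Printing Implicit Defensive.

(* t ::= x | \x.t | t u | t[x\u];  in [ES t u], index 0 of [t] is bound. *)
Inductive term : Type :=
| Var : nat -> term
| Lam : term -> term
| App : term -> term -> term
| ES  : term -> term -> term.

Fixpoint fv (n : nat) (t : term) : bool :=
  match t with
  | Var m => m == n
  | Lam b => fv n.+1 b
  | App t u => fv n t || fv n u
  | ES t u => fv n.+1 t || fv n u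
  end.

Fixpoint ofv (n : nat) (t : term) : bool :=
  match t with
  | Var m => m == n
  | Lam _ => false
  | App t u => ofv n t || ofv n u
  | ES t u => ofv n.+1 t || ofv n u
  end.

Fixpoint lift (k c : nat) (t : term) : term :=
  match t with
  | Var m => if m < c then Var m else Var (m + k)
  | Lam b => Lam (lift k c.+1 b)
  | App t u => App (lift k c t) (lift k c u)
  | ES t u => ES (lift k c.+1 t) (lift k c u)
  end.

(* remove the (absent) free index c: decrement free indices > c *)
Fixpoint lower (c : nat) (t : term) : term :=
  match t with
  | Var m => if m < c then Var m else Var m.-1
  | Lam b => Lam (lower c.+1 b)
  | App t u => App (lower c t) (lower c u)
  | ES t u => ES (lower c.+1 t) (lower c u)
  end.

Inductive sctx : Type :=
| SHole : sctx
| SES : sctx -> term -> sctx.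

Fixpoint plugS (Sc : sctx) (t : term) : term :=
  match Sc with
  | SHole => t
  | SES Sc u => ES (plugS Sc t) u
  end.

Fixpoint sdepth (Sc : sctx) : nat :=
  match Sc with SHole => 0 | SES Sc _ => (sdepth Sc).+1 end.

Inductive wctx : Type :=
| WHole : wctx
| WAppL : wctx -> term -> wctx
| WAppR : term -> wctx -> wctx
| WESR : term -> wctx -> wctx
| WESL : wctx -> term -> wctx.

Fixpoint plugW (W : wctx) (t : term) : term :=
  match W with
  | WHole => t
  | WAppL W u => App (plugW W t) u
  | WAppR u W => App u (plugW W t)
  | WESR u W => ES u (plugW W t)
  | WESL W u => ES (plugW W t) u
  end.

Fixpoint wdepth (W : wctx) : nat :=
  match W with
  | WHole => 0
  | WAppL W _ | WAppR _ W | WESR _ W => wdepth W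
  | WESL W _ => (wdepth W).+1
  end.

Inductive root_step : term -> term -> Prop :=
| root_m : forall Sc t u,
    root_step (App (plugS Sc (Lam t)) u)
              (plugS Sc (ES t (lift (sdepth Sc) 0 u)))
    (* W<<x>>[x\u] -> W<<u>>[x\u]: x is the index wdepth W at the hole *)
| root_e : forall W u,
    root_step (ES (plugW W (Var (wdepth W))) u)
              (ES (plugW W (lift (wdepth W).+1 0 u)) u)
| root_gcv : forall t Sc b,
    ~~ fv 0 t ->
    root_step (ES t (plugS Sc (Lam b)))
              (plugS Sc (lift (sdepth Sc) 0 (lower 0 t))).

Definition wstep (t t' : term) : Prop :=
  exists W r r', root_step r r' /\ t = plugW W r /\ t' = plugW W r'.

Definition w_normal (t : term) : Prop := forall t', ~ wstep t t'.

Inductive answer : term -> Prop :=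
| ans_val : forall b, answer (Lam b)
| ans_es_inert : forall a i,
    answer a -> inert i -> ~~ ofv 0 a -> answer (ES a i)
| ans_es_ans : forall a a',
    answer a -> answer a' -> fv 0 a -> ~~ ofv 0 a -> answer (ES a a')
with inert : term -> Prop :=
| in_var : forall x, inert (Var x)
| in_app : forall i n, inert i -> wnormal n -> inert (App i n)
| in_es_inert : forall i i',
    inert i -> inert i' -> ~~ ofv 0 i -> inert (ES i i')
| in_es_ans : forall i a,
    inert i -> answer a -> fv 0 i -> ~~ ofv 0 i -> inert (ES i a)
with wnormal : term -> Prop :=
| wn_ans : forall a, answer a -> wnormal a
| wn_inert : forall i, inert i -> wnormal i.

(* Main.v *)
Require Import Defs.
From mathcomp Require Import all_boot.

Lemma answer_S t : answer t -> exists Sc b, t = plugS Sc (Lam b).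
Proof.
  elim => [b|a i _ [Sc [b ->]] _ _|a a' _ [Sc [b ->]] _ _ _ _].
  - by exists SHole, b.
  - by exists (SES Sc i), b.
  - by exists (SES Sc a'), b.
Qed.

Lemma inert_notS Sc b : ~ inert (plugS Sc (Lam b)).
Proof.
  elim: Sc => [|Sc IH u] /= H; inversion H; subst; auto.
Qed.

Lemma wnormal_App t u : wnormal (App t u) -> inert t /\ wnormal u.
Proof.
  move=> H; inversion H; subst.
  - inversion H0.
  - inversion H0; subst; auto.
Qed.

Lemma wnormal_ES t u : wnormal (ES t u) ->
  wnormal t /\ wnormal u /\ ~~ ofv 0 t /\ (answer u -> fv 0 t).
Proof.
  move=> H; inversion H; subst; inversion H0; subst.
  - split; [by apply: wn_ans|split; [by apply: wn_inert|split=> //]].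
    move=> Hu; apply answer_S in Hu as [Sc [b ->]]; by apply inert_notS in H4.
  - split; [by apply: wn_ans|split; [by apply: wn_ans|split=> //]].
  - split; [by apply: wn_inert|split; [by apply: wn_inert|split=> //]].
    move=> Hu; apply answer_S in Hu as [Sc [b ->]]; by apply inert_notS in H4.
  - split; [by apply: wn_inert|split; [by apply: wn_ans|split=> //]].
Qed.

Lemma ofv_plug W n : ofv n (plugW W (Var (wdepth W + n))).
Proof.
  elim: W n => [|W IH u|u W IH|u W IH|W IH u] n /=.
  - by rewrite eqxx.
  - by rewrite IH.
  - by rewrite IH orbT.
  - by rewrite IH orbT.
  - by rewrite addSnnS IH.
Qed.

Lemma ofv_plug_inv t n : ofv n t -> exists W, t = plugW W (Var (wdepth W + n)).
Proof.
  elim: t n => [m|b IH|t IHt u IHu|t IHt u IHu] n /=.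
  - by move/eqP=> ->; exists WHole.
  - by [].
  - case/orP=> [/IHt [W ->]|/IHu [W ->]].
    + by exists (WAppL W u).
    + by exists (WAppR t W).
  - case/orP=> [/IHt [W ->]|/IHu [W ->]].
    + by exists (WESL W u); rewrite /= addSnnS.
    + by exists (WESR t W).
Qed.

Lemma root_nf r r' : wnormal r -> root_step r r' -> False.
Proof.
  move=> Hn Hs; case: Hs Hn.
  - move=> Sc t u /wnormal_App [Hi _]; exact: inert_notS Hi.
  - move=> W u /wnormal_ES [_ [_ [Ho _]]].
    by move: Ho; rewrite -[wdepth W]addn0 ofv_plug.
  - move=> t Sc b Hf /wnormal_ES [_ [Hu [_ Ha]]].
    inversion Hu; subst.
    + by move: Hf; rewrite Ha.
    + exact: inert_notS H.
Qed.

Lemma wnormal_sub W r : wnormal (plugW W r) -> wnormal r.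
Proof.
  elim: W => [|W IH u|u W IH|u W IH|W IH u] //= H; apply: IH.
  - by case/wnormal_App: H => H _; apply: wn_inert.
  - by case/wnormal_App: H.
  - by case/wnormal_ES: H => _ [].
  - by case/wnormal_ES: H.
Qed.

Fixpoint compW (W W' : wctx) : wctx :=
  match W with
  | WHole => W'
  | WAppL W u => WAppL (compW W W') u
  | WAppR u W => WAppR u (compW W W')
  | WESR u W => WESR u (compW W W')
  | WESL W u => WESL (compW W W') u end.

Lemma plugW_comp W W' r : plugW W (plugW W' r) = plugW (compW W W') r.
Proof. by elim: W => [|W IH u|u W IH|u W IH|W IH u] //=; rewrite IH. Qed.

Lemma wn_sub W t t' : wstep t t' -> wstep (plugW W t) (plugW W t').
Proof.
  move=> [W' [r [r' [Hs [-> ->]]]]].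
  by exists (compW W W'), r, r'; rewrite !plugW_comp.
Qed.

Lemma wn_root r r' : root_step r r' -> wstep r r'.
Proof. by move=> H; exists WHole, r, r'. Qed.

Theorem proposition4p2 (t : term) : w_normal t <-> wnormal t.
Proof.
  split.
  - elim: t => [m|b _|t IHt u IHu|t IHt u IHu] H.
    + by apply: wn_inert; constructor.
    + by apply: wn_ans; constructor.
    + have Ht : wnormal t by apply: IHt => t' Hs; apply: (H (App t' u));
        exact (wn_sub (WAppL WHole u) _ _ Hs).
      have Hu : wnormal u by apply: IHu => u' Hs; apply: (H (App t u'));
        exact (wn_sub (WAppR t WHole) _ _ Hs).
      apply: wn_inert; apply: in_app => //.
      inversion Ht; subst => //.
      case: (answer_S _ H0) => Sc [b Hb]; subst.
      by case: (H _ (wn_root _ _ (root_m Sc b u))).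
    + have Ht : wnormal t by apply: IHt => t' Hs; apply: (H (ES t' u));
        exact (wn_sub (WESL WHole u) _ _ Hs).
      have Hu : wnormal u by apply: IHu => u' Hs; apply: (H (ES t u'));
        exact (wn_sub (WESR t WHole) _ _ Hs).
      have Ho : ~~ ofv 0 t.
        apply/negP => /ofv_plug_inv [W]; rewrite addn0 => Ht'; subst.
        by case: (H _ (wn_root _ _ (root_e W u))).
      have Hf : answer u -> fv 0 t.
        move=> /answer_S [Sc [b Hb]]; subst.
        case Hf: (fv 0 t) => //.
        by case: (H _ (wn_root _ _ (@root_gcv t Sc b (negbT Hf)))).
      inversion Ht; subst; inversion Hu; subst.
      * by apply: wn_ans; apply: ans_es_ans; [done|done|exact: Hf|done].
      * by apply: wn_ans; apply: ans_es_inert.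
      * by apply: wn_inert; apply: in_es_ans; [done|done|exact: Hf|done].
      * by apply: wn_inert; apply: in_es_inert.
  - move=> H t' [W [r [r' [Hs [Ht _]]]]]; subst.
    exact: (root_nf _ _ (wnormal_sub _ _ H) Hs).
Qed.
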